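(* Let $n\ge 2$ and let $P$ be an $n\times n$ permutation matrix which is the leaf matrix of exactly one CNM of size $n$. Then $P$ has no nonzero entry on the main diagonal, i.e. $P_{i,i}=0$ for all $i$.
   Context: A complete non-ambiguous matrix (CNM) of size $n$ is an $n\times n$ matrix $M=(m_{i,j})$ with entries in $\{0,1\}$ whose support $T=\{(i,j): m_{i,j}=1\}$ (whose elements are called vertices) satisfies: (1) $(1,1)\in T$; (2) for every $p=(i,j)\in T$ with $p\neq(1,1)$, exactly one of the following holds: there is $(i',j)\in T$ with $i'<i$, or there is $(i,j')\in T$ with $j'<j$; (3) every row and every column of $M$ contains at least one vertex; (4) define the parent of $p=(i,j)\neq(1,1)$ to be $(i',j)$ with $i'<i$ maximal if such a vertex exists, and otherwise $(i,j')$ with $j'<j$ maximal; then every vertex is the parent of either zero or exactly two vertices. A vertex with no children is a leaf. The leaf matrix $p(M)$ is obtained from $M$ by replacing all non-leaf vertices by $0$ (it is a permutation matrix). A permutation matrix $P$ is ''the leaf matrix of exactly one CNM'' if there is exactly one CNM $M$ with $p(M)=P$. *)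

(* Defs.v *)
From mathcomp Require Import all_boot all_algebra all_fingroup.
Set Implicit Arguments. Unset Strict Implicit. Unset Printing Implicit Defensive.

(* 0/1 matrices are represented as boolean matrices 'M[bool]_n; indices are
   0-based, so the paper's (1,1) is the entry (i,j) with val i = val j = 0. *)

Definition is_root n (i j : 'I_n) : bool := (val i == 0) && (val j == 0).

Definition above n (M : 'M[bool]_n) (i j : 'I_n) : bool :=
  [exists k : 'I_n, (k < i) && M k j].
Definition leftof n (M : 'M[bool]_n) (i j : 'I_n) : bool :=
  [exists k : 'I_n, (k < j) && M i k].

Definition isparent n (M : 'M[bool]_n) (p c : 'I_n * 'I_n) : bool :=
  let: (a, b) := p in let: (i, j) := c in
  [&& M a b, M i j, ~~ is_root i j &
   if above M i j then
     [&& b == j, a < i & [forall k : 'I_n, ((a < k) && (k < i)) ==> ~~ M k j]]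
   else
     [&& a == i, b < j & [forall k : 'I_n, ((b < k) && (k < j)) ==> ~~ M i k]]].

Definition children n (M : 'M[bool]_n) (p : 'I_n * 'I_n) : {set 'I_n * 'I_n} :=
  [set c | isparent M p c].

Definition is_CNM n (M : 'M[bool]_n) : Prop :=
  (exists i j : 'I_n, is_root i j && M i j) /\
  (forall i j : 'I_n, M i j -> ~~ is_root i j ->
               (above M i j) (+) (leftof M i j)) /\
  (forall i : 'I_n, exists j : 'I_n, M i j) /\
            (forall j : 'I_n, exists i : 'I_n, M i j) /\
  (forall i j : 'I_n, M i j ->
               #|children M (i, j)| = 0 \/ #|children M (i, j)| = 2).

Definition is_leaf n (M : 'M[bool]_n) (i j : 'I_n) : bool :=
  M i j && (children M (i, j) == set0).

Definition leaf_matrix n (M : 'M[bool]_n) : 'M[bool]_n :=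
  \matrix_(i, j) is_leaf M i j.

Definition is_perm_matrix n (P : 'M[bool]_n) : Prop :=
  exists s : 'S_n, forall i j : 'I_n, P i j = (s i == j).

(* Main.v *)
Require Import Defs.
From mathcomp Require Import all_boot all_algebra all_fingroup.
Set Implicit Arguments. Unset Strict Implicit. Unset Printing Implicit Defensive.


Lemma aboveP n (M : 'M[bool]_n) (i j : 'I_n) :
  reflect (exists2 k : 'I_n, k < i & M k j) (above M i j).
Proof.
apply: (iffP existsP) => [[k /andP[h1 h2]]|[k h1 h2]]; first by exists k.
by exists k; rewrite h1 h2.
Qed.

Lemma leftofP n (M : 'M[bool]_n) (i j : 'I_n) :
  reflect (exists2 k : 'I_n, k < j & M i k) (leftof M i j).
Proof.
apply: (iffP existsP) => [[k /andP[h1 h2]]|[k h1 h2]]; first by exists k.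
by exists k; rewrite h1 h2.
Qed.

Lemma btwP n (P : 'I_n -> bool) (a b : nat) :
  reflect (forall k : 'I_n, a < k -> k < b -> ~~ P k)
          [forall k : 'I_n, ((a < k) && (k < b)) ==> ~~ P k].
Proof.
apply: (iffP forallP) => [h k h1 h2|h k]; first by move: (h k); rewrite h1 h2.
by apply/implyP => /andP[h1 h2]; apply: h.
Qed.

Lemma isparent_ab n (M : 'M[bool]_n) (a b i j : 'I_n) :
  above M i j ->
  isparent M (a,b) (i,j) =
  [&& M a b, M i j, ~~ is_root i j, b == j, a < i &
      [forall k : 'I_n, ((a < k) && (k < i)) ==> ~~ M k j]].
Proof. by move=> h; rewrite /isparent h. Qed.

Lemma isparent_lf n (M : 'M[bool]_n) (a b i j : 'I_n) :
  ~~ above M i j ->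
  isparent M (a,b) (i,j) =
  [&& M a b, M i j, ~~ is_root i j, a == i, b < j &
      [forall k : 'I_n, ((b < k) && (k < j)) ==> ~~ M i k]].
Proof. by move=> h; rewrite /isparent (negbTE h). Qed.

Lemma ord_eq n (a b : 'I_n) : ~~ (a < b) -> ~~ (b < a) -> a = b.
Proof. by move=> h1 h2; apply/val_inj/eqP; rewrite eqn_leq leqNgt h2 leqNgt h1. Qed.

Lemma par_uniq n (M : 'M[bool]_n) w1 w2 z :
  isparent M w1 z -> isparent M w2 z -> w1 = w2.
Proof.
case: w1 w2 z => [a1 b1] [a2 b2] [i j].
case ha: (above M i j).
- rewrite !isparent_ab // => /and5P[m1 _ _ /eqP e1 /andP[l1 /btwP f1]].
  move=> /and5P[m2 _ _ /eqP e2 /andP[l2 /btwP f2]]; subst.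
  congr pair; apply: ord_eq; apply/negP => h.
  + by move: (f1 _ h l2); rewrite m2.
  + by move: (f2 _ h l1); rewrite m1.
- rewrite !isparent_lf ?ha // => /and5P[m1 _ _ /eqP e1 /andP[l1 /btwP f1]].
  move=> /and5P[m2 _ _ /eqP e2 /andP[l2 /btwP f2]]; subst.
  congr pair; apply: ord_eq; apply/negP => h.
  + by move: (f1 _ h l2); rewrite m2.
  + by move: (f2 _ h l1); rewrite m1.
Qed.

Lemma below_uniq n (M : 'M[bool]_n) w z1 z2 :
  isparent M w z1 -> isparent M w z2 -> above M z1.1 z1.2 -> above M z2.1 z2.2 -> z1 = z2.
Proof.
case: w z1 z2 => [a b] [i1 j1] [i2 j2] + + /= h1 h2.
rewrite !isparent_ab // => /and5P[_ m1 _ /eqP e1 /andP[l1 /btwP f1]].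
move=> /and5P[_ m2 _ /eqP e2 /andP[l2 /btwP f2]]; subst.
congr pair; apply: ord_eq; apply/negP => h.
+ by move: (f2 _ l1 h); rewrite m1.
+ by move: (f1 _ l2 h); rewrite m2.
Qed.

Lemma right_uniq n (M : 'M[bool]_n) w z1 z2 :
  isparent M w z1 -> isparent M w z2 -> ~~ above M z1.1 z1.2 -> ~~ above M z2.1 z2.2 -> z1 = z2.
Proof.
case: w z1 z2 => [a b] [i1 j1] [i2 j2] + + /= h1 h2.
rewrite !isparent_lf // => /and5P[_ m1 _ /eqP e1 /andP[l1 /btwP f1]].
move=> /and5P[_ m2 _ /eqP e2 /andP[l2 /btwP f2]]; subst.
congr pair; apply: ord_eq; apply/negP => h.
+ by move: (f2 _ l1 h); rewrite m1.
+ by move: (f1 _ l2 h); rewrite m2.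
Qed.


Lemma card2_split n (M : 'M[bool]_n) w : #|children M w| = 2 ->
  exists zb zr, [/\ isparent M w zb, above M zb.1 zb.2, isparent M w zr & ~~ above M zr.1 zr.2].
Proof.
move/eqP/cards2P => [x [y [nxy E]]].
have : x \in children M w by rewrite E !inE eqxx.
rewrite inE => hx.
have : y \in children M w by rewrite E !inE eqxx orbT.
rewrite inE => hy.
case ax: (above M x.1 x.2); case ay: (above M y.1 y.2).
- by move: nxy; rewrite (below_uniq hx hy) ?ax ?ay ?eqxx.
- by exists x, y; rewrite ay.
- by exists y, x; rewrite ax.
- by move: nxy; rewrite (right_uniq hx hy) ?ax ?ay ?eqxx.
Qed.

Lemma no_right_leaf n (M : 'M[bool]_n) (H : is_CNM M) w : M w.1 w.2 ->
  (forall z, isparent M w z -> above M z.1 z.2) -> children M w = set0.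
Proof.
case: H => _ [_ [_ [_ H4]]]; case: w => a b /= Mw h.
case: (H4 a b Mw) => c; first by apply: cards0_eq.
by case: (card2_split c) => zb [zr [_ _ p2 n2]]; move: n2; rewrite h.
Qed.

Lemma no_below_leaf n (M : 'M[bool]_n) (H : is_CNM M) w : M w.1 w.2 ->
  (forall z, isparent M w z -> ~~ above M z.1 z.2) -> children M w = set0.
Proof.
case: H => _ [_ [_ [_ H4]]]; case: w => a b /= Mw h.
case: (H4 a b Mw) => c; first by apply: cards0_eq.
by case: (card2_split c) => zb [zr [p1 a1 _ _]]; move: (h _ p1); rewrite a1.
Qed.

Lemma ex_max_ord n (P : pred 'I_n) x : P x ->
  exists2 m, P m & forall y, P y -> y <= m.
Proof. by move=> Px; case: (arg_maxnP (fun i : 'I_n => val i) Px) => m Pm h; exists m. Qed.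

Lemma ex_min_ord n (P : pred 'I_n) x : P x ->
  exists2 m, P m & forall y, P y -> m <= y.
Proof. by move=> Px; case: (arg_minnP (fun i : 'I_n => val i) Px) => m Pm h; exists m. Qed.

Lemma rightmost_leaf n (M : 'M[bool]_n) (H : is_CNM M) i j : M i j ->
  (forall j' : 'I_n, j < j' -> ~~ M i j') -> is_leaf M i j.
Proof.
move=> Mij h; rewrite /is_leaf Mij; apply/eqP; apply: (no_right_leaf H) => //.
move=> [a b] hp; change (above M a b); case na: (above M a b) => //; move: hp.
rewrite isparent_lf ?na // => /and5P[_ Mab _ /eqP ea /andP[jb _]]; subst a.
by move: (h _ jb); rewrite Mab.
Qed.

Lemma bottommost_leaf n (M : 'M[bool]_n) (H : is_CNM M) i j : M i j ->
  (forall i' : 'I_n, i < i' -> ~~ M i' j) -> is_leaf M i j.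
Proof.
move=> Mij h; rewrite /is_leaf Mij; apply/eqP; apply: (no_below_leaf H) => //.
move=> [a b] hp; change (~~ above M a b); apply/negP => na; move: hp.
rewrite isparent_ab // => /and5P[_ Mab _ /eqP ea /andP[jb _]]; subst b.
by move: (h _ jb); rewrite Mab.
Qed.

Lemma left_of_above_leaf n (M : 'M[bool]_n) (H : is_CNM M) i j j2 :
  M i j -> M i j2 -> j < j2 -> (forall t : 'I_n, j < t -> t < j2 -> ~~ M i t) ->
  above M i j2 -> is_leaf M i j.
Proof.
move=> Mij Mij2 lt btw ab; rewrite /is_leaf Mij; apply/eqP; apply: (no_right_leaf H) => //.
move=> [a b] hp; change (above M a b); case na: (above M a b) => //; move: hp.
rewrite isparent_lf ?na // => /and5P[_ Mab _ /eqP ea /andP[jb /btwP f]]; subst a.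
case: (ltngtP b j2) => c.
- by move: (btw _ jb c); rewrite Mab.
- by move: (f _ lt c); rewrite Mij2.
- by move: na; rewrite (_ : b = j2) ?ab //; apply: val_inj.
Qed.

Lemma above_of_left_leaf n (M : 'M[bool]_n) (H : is_CNM M) i i2 j :
  M i j -> M i2 j -> i < i2 -> (forall t : 'I_n, i < t -> t < i2 -> ~~ M t j) ->
  ~~ above M i2 j -> is_leaf M i j.
Proof.
move=> Mij Mi2j lt btw ab; rewrite /is_leaf Mij; apply/eqP; apply: (no_below_leaf H) => //.
move=> [a b] hp; change (~~ above M a b); apply/negP => na; move: hp.
rewrite isparent_ab // => /and5P[_ Mab _ /eqP ea /andP[jb /btwP f]]; subst b.
case: (ltngtP a i2) => c.
- by move: (btw _ jb c); rewrite Mab.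
- by move: (f _ lt c); rewrite Mi2j.
- by move: ab; rewrite (_ : i2 = a) ?na //; apply: val_inj.
Qed.


Lemma leaf_perm n (M : 'M[bool]_n) (s : 'S_n) :
  (forall i j, leaf_matrix M i j = (s i == j)) -> forall i j, is_leaf M i j = (s i == j).
Proof. by move=> h i j; rewrite -h mxE. Qed.

Lemma vertex_le_leaf n (M : 'M[bool]_n) (H : is_CNM M) (s : 'S_n)
  (hs : forall i j, is_leaf M i j = (s i == j)) i j : M i j -> j <= s i.
Proof.
move=> Mij; case: (ex_max_ord (P := fun k => M i k) Mij) => m Mm hm.
have: is_leaf M i m.
  apply: rightmost_leaf => // j' lt; apply/negP => h; move: (hm _ h).
  by rewrite leqNgt lt.
by rewrite hs => /eqP ->; apply: hm.
Qed.

Lemma vertex_le_leafc n (M : 'M[bool]_n) (H : is_CNM M) (s : 'S_n)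
  (hs : forall i j, is_leaf M i j = (s i == j)) i j : M i j -> i <= (s^-1)%g j.
Proof.
move=> Mij; case: (ex_max_ord (P := fun k => M k j) Mij) => m Mm hm.
have: is_leaf M m j.
  apply: bottommost_leaf => // j' lt; apply/negP => h; move: (hm _ h).
  by rewrite leqNgt lt.
by rewrite hs => /eqP <-; rewrite permK; apply: hm.
Qed.

Lemma crossing n (M : 'M[bool]_n) (H : is_CNM M) (rho : 'I_n) (kk : nat) :
  0 < rho -> (forall j : 'I_n, j < kk -> ~~ M rho j) ->
  forall y c : 'I_n, rho < y -> c < kk -> M y c ->
  exists (c x y' : 'I_n), [/\ c < kk, x < rho < y', M x c, M y' c &
     forall t : 'I_n, x < t -> t < y' -> ~~ M t c].
Proof.
move=> r0 hr.
suff: forall m, forall y c : 'I_n, val c = m -> rho < y -> c < kk -> M y c ->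
  exists (c x y' : 'I_n), [/\ c < kk, x < rho < y', M x c, M y' c &
     forall t : 'I_n, x < t -> t < y' -> ~~ M t c].
  by move=> h y c; apply: (h c).
elim/ltn_ind => m IH y c cm ry ck Myc.
case ex: [exists x : 'I_n, (x < rho) && M x c].
- case/existsP: ex => x0 hx0.
  case: (ex_max_ord (P := fun x => (x < rho) && M x c) hx0) => x /andP[xr Mx] hx.
  have hy0 : (rho < y) && M y c by rewrite ry Myc.
  case: (ex_min_ord (P := fun x => (rho < x) && M x c) hy0) => y' /andP[ry' My'] hy'.
  exists c, x, y'; split => //; first by rewrite xr ry'.
  move=> t xt ty; apply/negP => Mt.
  case: (ltngtP t rho) => c1.
  + by move: (hx t); rewrite c1 Mt leqNgt xt => /(_ isT).
  + by move: (hy' t); rewrite c1 Mt leqNgt ty => /(_ isT).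
  + by move: (hr c ck); rewrite (_ : rho = t) ?Mt //; apply: val_inj.
- have hy0 : M y c by [].
  case: (ex_min_ord (P := fun t => M t c) hy0) => t0 Mt0 ht0.
  have rt0 : rho < t0.
    case: (ltngtP t0 rho) => c1 //.
    + by move/negbT: ex => /existsP; case; exists t0; rewrite c1 Mt0.
    + by move: (hr c ck); rewrite (_ : rho = t0) ?Mt0 //; apply: val_inj.
  case: H => _ [H2 _].
  have nr : ~~ is_root t0 c.
    by rewrite /is_root; apply/negP => /andP[/eqP e _]; move: rt0; rewrite e.
  move: (H2 _ _ Mt0 nr).
  case ab: (above M t0 c).
  + by case/aboveP: ab => k kt Mk; move: (ht0 k Mk); rewrite leqNgt kt.
  + rewrite /= => /leftofP [c' c'c Mc'].
    apply: (IH c' _ t0 c') => //; first by rewrite -cm.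
    by apply: ltn_trans ck.
Qed.


Lemma pigeon n (s : 'S_n) (k : nat) (D : {set 'I_n}) :
  (forall i, s i < k -> i \in D) -> #|[set j : 'I_n | j < k]| <= #|D|.
Proof.
move=> h; have pinj : injective s by apply: perm_inj.
rewrite -(card_preimset [set j : 'I_n | j < k] pinj); apply: subset_leq_card.
by apply/subsetP => i; rewrite !inE => /h.
Qed.

Lemma leaf_vertex n (M : 'M[bool]_n) (s : 'S_n)
  (hs : forall i j, is_leaf M i j = (s i == j)) i : M i (s i).
Proof. by have := hs i (s i); rewrite eqxx /is_leaf => /andP[]. Qed.

Lemma exists_below n (M : 'M[bool]_n) (H : is_CNM M) (s : 'S_n)
  (hs : forall i j, is_leaf M i j = (s i == j)) (rho : 'I_n) (k : nat) (D : {set 'I_n}) :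
  (forall i : 'I_n, s i < k -> i <= rho -> i \in D) ->
  #|D| < #|[set j : 'I_n | j < k]| ->
  exists y c : 'I_n, [/\ rho < y, c < k & M y c].
Proof.
move=> hD lt.
case ex: [exists y : 'I_n, [exists c : 'I_n, [&& rho < y, c < k & M y c]]].
- case/existsP: ex => y /existsP [c /and3P[a b d]]; by exists y, c.
- have: #|[set j : 'I_n | j < k]| <= #|D|.
    apply: pigeon => i si; apply: hD; first exact: si.
    rewrite leqNgt; apply/negP => ri.
    move/negbT: ex => /existsP; case; exists i; apply/existsP; exists (s i).
    by rewrite ri si (leaf_vertex hs).
  by rewrite leqNgt lt.
Qed.


Definition mv n (M : 'M[bool]_n) (p v : 'I_n * 'I_n) : 'M[bool]_n :=
  \matrix_(i, j) if (i, j) == v then true else if (i, j) == p then false else M i j.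

Lemma mvE n (M : 'M[bool]_n) p v i j :
  mv M p v i j = if (i, j) == v then true else if (i, j) == p then false else M i j.
Proof. by rewrite mxE. Qed.

Lemma oltF n (a b : 'I_n) : a < b -> (a == b) = false.
Proof. by move=> h; rewrite -val_eqE ltn_eqF. Qed.
Lemma ogtF n (a b : 'I_n) : b < a -> (a == b) = false.
Proof. by move=> h; rewrite -val_eqE gtn_eqF. Qed.

Lemma forall_eq n (P Q : 'I_n -> bool) (lo hi : nat) :
  (forall t : 'I_n, lo < t -> t < hi -> P t = Q t) ->
  [forall t : 'I_n, ((lo < t) && (t < hi)) ==> ~~ P t] =
  [forall t : 'I_n, ((lo < t) && (t < hi)) ==> ~~ Q t].
Proof.
move=> h; apply: eq_forallb => t; case: (boolP ((lo < t) && (t < hi))) => // /andP[h1 h2].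
by rewrite h.
Qed.

Lemma forall_false n (P : 'I_n -> bool) (lo hi : nat) (t : 'I_n) :
  lo < t -> t < hi -> P t ->
  [forall t : 'I_n, ((lo < t) && (t < hi)) ==> ~~ P t] = false.
Proof. by move=> h1 h2 h3; apply/negbTE/negP => /btwP /(_ t h1 h2); rewrite h3. Qed.

Lemma ord_eqn n (a b : 'I_n) : val a = val b -> a = b.
Proof. by apply: val_inj. Qed.

Lemma exists_parent n (M : 'M[bool]_n) (H : is_CNM M) i j :
  M i j -> ~~ is_root i j -> exists w, isparent M w (i, j).
Proof.
move=> Mij nr; case: H => _ [H2 _].
case ab: (above M i j).
- move: (ab) => /aboveP [t0 t0i Mt0].
  have h0 : (t0 < i) && M t0 j by rewrite t0i Mt0.
  case: (ex_max_ord (P := fun t => (t < i) && M t j) h0) => t /andP[ti Mt] ht.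
  exists (t, j); rewrite isparent_ab // Mt Mij nr eqxx ti /=.
  apply/btwP => u tu ui; apply/negP => Mu; move: (ht u); rewrite ui Mu leqNgt tu.
  by move/(_ isT).
- move: (H2 _ _ Mij nr); rewrite ab /= => /leftofP [t0 t0j Mt0].
  have h0 : (t0 < j) && M i t0 by rewrite t0j Mt0.
  case: (ex_max_ord (P := fun t => (t < j) && M i t) h0) => t /andP[tj Mt] ht.
  exists (i, t); rewrite isparent_lf ?ab // Mt Mij nr eqxx tj /=.
  apply/btwP => u tu uj; apply/negP => Mu; move: (ht u); rewrite uj Mu leqNgt tu.
  by move/(_ isT).
Qed.

Lemma nroot_l n (i j : 'I_n) : 0 < i -> ~~ is_root i j.
Proof. by rewrite /is_root lt0n => /negbTE ->. Qed.
Lemma nroot_r n (i j : 'I_n) : 0 < j -> ~~ is_root i j.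
Proof. by rewrite /is_root lt0n => /negbTE ->; rewrite andbF. Qed.


Lemma move1 n (M : 'M[bool]_n) (H : is_CNM M) (a k b r c x y : 'I_n) :
  above M k k -> isparent M (a,k) (k,k) ->
  ~~ above M a k -> isparent M (a,b) (a,k) ->
  ~~ above M a r -> isparent M (a,k) (a,r) ->
  (forall i : 'I_n, k < i -> ~~ M i k) ->
  (forall j : 'I_n, j < k -> ~~ M k j) ->
  c < k -> x < k -> k < y -> M x c -> M y c ->
  (forall t : 'I_n, x < t -> t < y -> ~~ M t c) ->
  is_CNM (mv M (a,k) (k,c)) /\
  (forall i j, is_leaf (mv M (a,k) (k,c)) i j = is_leaf M i j) /\
  mv M (a,k) (k,c) a k = false.
Proof.
move=> abL hp nab hq naR hR hLb hrow ck xk ky Mx My hxy.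
set M' := mv M (a,k) (k,c).
move: (hp); rewrite isparent_ab // => /and5P[Mp ML nrL _ /andP[ak /btwP hak]].
move: (hq); rewrite isparent_lf // => /and5P[Mq _ nrp _ /andP[bk /btwP hbk]].
move: (hR); rewrite isparent_lf // => /and5P[_ MR nrR _ /andP[kr /btwP hkr]].
have hcolk : forall t : 'I_n, t < a -> ~~ M t k.
  by move=> t ta; apply/negP => Mt; move/negP: nab; apply; apply/aboveP; exists t.
have Mv : M k c = false by apply/negbTE/hrow.
have F1 := oltF ak. have F2 := ogtF ak. have F3 := oltF ck. have F4 := ogtF ck.
have F5 := oltF bk. have F6 := ogtF kr. have F7 := oltF xk. have F8 := ogtF ky.
have F9 := ogtF (ltn_trans ck kr). have F10 := oltF (ltn_trans xk ky).
have colk : forall i : 'I_n, M i k -> i = a \/ i = k.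
  move=> i Mi; case: (ltngtP i a) => c1; last by left; apply: ord_eqn.
  - by move: (hcolk _ c1); rewrite Mi.
  - case: (ltngtP i k) => c2; last by right; apply: ord_eqn.
    + by move: (hak _ c1 c2); rewrite Mi.
    + by move: (hLb _ c2); rewrite Mi.
have E : forall i j, M' i j = if (i,j) == (k,c) then true else if (i,j) == (a,k) then false else M i j.
  by move=> i j; rewrite /M' mvE.
have M'v : M' k c by rewrite E eqxx.
have M'p : M' a k = false by rewrite E !xpair_eqE F1 !eqxx.
have M'o : forall i j, (i,j) != (k,c) -> (i,j) != (a,k) -> M' i j = M i j.
  by move=> i j h1 h2; rewrite E (negbTE h1) (negbTE h2).
have M'L : M' k k by rewrite E !xpair_eqE F2 F4 ?andbF ?andFb /= ML.
have M'q : M' a b by rewrite E !xpair_eqE F1 F5 ?andbF ?andFb /= Mq.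
have M'R : M' a r by rewrite E !xpair_eqE F1 F6 ?andbF ?andFb /= MR.
have M'x : M' x c by rewrite E !xpair_eqE F7 F3 ?andbF ?andFb /= Mx.
have M'y : M' y c by rewrite E !xpair_eqE F8 F3 ?andbF ?andFb /= My.
have abL' : above M' k k = false.
  apply/negbTE/negP => /aboveP [t tk Mt].
  case: (ltngtP t a) => c1.
  - move: Mt; rewrite M'o ?xpair_eqE ?(oltF tk) ?(oltF c1) //.
    by rewrite (negbTE (hcolk _ c1)).
  - move: Mt; rewrite M'o ?xpair_eqE ?(oltF tk) ?(ogtF c1) //.
    by rewrite (negbTE (hak _ c1 tk)).
  - by move: Mt; rewrite (ord_eqn c1) M'p.
have ab_gen : forall i j, M i j -> (i,j) != (k,k) -> above M' i j = above M i j.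
  move=> i j Mij nL; apply/idP/idP => /aboveP [t ti Mt].
  - move: Mt; rewrite E; case: eqP => [[et ej] _|_].
      by subst; apply/aboveP; exists x => //; apply: ltn_trans ti.
    case: eqP => // _ Mt; by apply/aboveP; exists t.
  - case: (eqVneq (t,j) (a,k)) => [[et ej]|ne].
      subst t j; case: (colk _ Mij) => ei; first by move: ti; rewrite ei ltnn.
      by move: nL; rewrite ei eqxx.
    case: (eqVneq (t,j) (k,c)) => [[et ej]|nv]; first by subst; move: Mt; rewrite Mv.
    by apply/aboveP; exists t => //; rewrite M'o.
have lf_gen : forall i j, M' i j -> (i,j) != (k,k) -> leftof M' i j = leftof M i j.
  move=> i j Mij nL; apply/idP/idP => /leftofP [t tj Mt].
  - move: Mt; rewrite E; case: eqP => [[ei et] _|_].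
      subst i t; move: Mij; rewrite M'o ?xpair_eqE ?F2 ?(ogtF tj) ?andbF // => Mkj.
      case: (ltngtP j k) => c1.
      + by move: (hrow _ c1); rewrite Mkj.
      + by apply/leftofP; exists k.
      + by move: nL; rewrite (ord_eqn c1) eqxx.
    case: eqP => // _ Mt; by apply/leftofP; exists t.
  - case: (eqVneq (i,t) (a,k)) => [[ei et]|ne].
      subst i t; apply/leftofP; exists b; last by [].
      by apply: ltn_trans tj.
    case: (eqVneq (i,t) (k,c)) => [[ei et]|nv]; first by subst; move: Mt; rewrite Mv.
    by apply/leftofP; exists t => //; rewrite M'o.
have k0 : 0 < k by apply: leq_ltn_trans ak.
have nrv : ~~ is_root k c by apply: nroot_l.
have nry : ~~ is_root y c by apply: nroot_l; apply: ltn_trans ky.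
have abv : above M' k c by apply/aboveP; exists x.
have aby : above M' y c by apply/aboveP; exists k.
have parL : forall w, isparent M' w (k,k) = (w == (k,c)).
  case=> w1 w2; rewrite isparent_lf ?abL' //; apply/idP/idP.
  - move=> /and5P[Mw _ _ /eqP e /andP[w2k _]]; subst w1.
    case: (eqVneq w2 c) => [->|nc]; first by rewrite eqxx.
    by move: Mw; rewrite M'o ?xpair_eqE ?eqxx ?(negbTE nc) ?F2 ?andbF // (negbTE (hrow _ w2k)).
  - rewrite xpair_eqE => /andP[/eqP -> /eqP ->].
    rewrite M'v M'L nrL eqxx ck /=; apply/btwP => t ct tk.
    by rewrite M'o ?xpair_eqE ?(ogtF ct) ?F2 ?andbF // hrow.
have parv : forall w, isparent M' w (k,c) = (w == (x,c)).
  case=> w1 w2; rewrite isparent_ab //; apply/idP/idP.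
  - move=> /and5P[Mw _ _ /eqP e /andP[w1k /btwP hw]]; subst w2.
    have Mw1 : M w1 c by move: Mw; rewrite M'o ?xpair_eqE ?(oltF w1k) ?F3 ?andbF.
    rewrite xpair_eqE eqxx andbT; apply/eqP; case: (ltngtP w1 x) => c1.
    + by move: (hw _ c1 xk); rewrite M'x.
    + by move: (hxy _ c1 (ltn_trans w1k ky)); rewrite Mw1.
    + by apply: ord_eqn.
  - rewrite xpair_eqE => /andP[/eqP -> /eqP ->].
    rewrite M'x M'v nrv eqxx xk /=; apply/btwP => t xt tk.
    by rewrite M'o ?xpair_eqE ?(oltF tk) ?F3 ?andbF // hxy // (ltn_trans tk ky).
have paryc : forall w, isparent M' w (y,c) = (w == (k,c)).
  case=> w1 w2; rewrite isparent_ab //; apply/idP/idP.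
  - move=> /and5P[Mw _ _ /eqP e /andP[w1y /btwP hw]]; subst w2.
    rewrite xpair_eqE eqxx andbT; apply/eqP; case: (ltngtP w1 k) => c1.
    + by move: (hw _ c1 ky); rewrite M'v.
    + have Mw1 : M w1 c by move: Mw; rewrite M'o ?xpair_eqE ?(ogtF c1) ?F3 ?andbF.
      by move: (hxy _ (ltn_trans xk c1) w1y); rewrite Mw1.
    + by apply: ord_eqn.
  - rewrite xpair_eqE => /andP[/eqP -> /eqP ->].
    rewrite M'v M'y nry eqxx ky /=; apply/btwP => t kt ty.
    by rewrite M'o ?xpair_eqE ?(ogtF kt) ?F3 ?andbF // hxy // (ltn_trans xk kt).
have naR' : ~~ above M' a r by rewrite ab_gen // xpair_eqE F1.
have parR : forall w, isparent M' w (a,r) = (w == (a,b)).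
  case=> w1 w2; rewrite isparent_lf //; apply/idP/idP.
  - move=> /and5P[Mw _ _ /eqP e /andP[w2r /btwP hw]]; subst w1.
    rewrite xpair_eqE eqxx /=; apply/eqP.
    case: (eqVneq w2 k) => [e|nk]; first by move: Mw; rewrite e M'p.
    have Mw2 : M a w2 by move: Mw; rewrite M'o ?xpair_eqE ?F1 ?eqxx ?(negbTE nk) ?andbF.
    case: (ltngtP w2 k) => c1; last by move: nk; rewrite (ord_eqn c1) eqxx.
    + case: (ltngtP w2 b) => c2; last by apply: ord_eqn.
      * by move: (hw _ c2 (ltn_trans bk kr)); rewrite M'q.
      * by move: (hbk _ c2 c1); rewrite Mw2.
    + by move: (hkr _ c1 w2r); rewrite Mw2.
  - rewrite xpair_eqE => /andP[/eqP -> /eqP ->].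
    rewrite M'q M'R nrR eqxx (ltn_trans bk kr) /=; apply/btwP => t bt tr.
    case: (ltngtP t k) => c1.
    + by rewrite M'o ?xpair_eqE ?F1 ?(oltF c1) ?andbF // hbk.
    + by rewrite M'o ?xpair_eqE ?F1 ?(ogtF c1) ?andbF // hkr.
    + by rewrite (ord_eqn c1) M'p.
have parp : forall w, isparent M' w (a,k) = false.
  by case=> w1 w2; rewrite /isparent M'p /= andbF.
have pargen : forall w (i j : 'I_n), (i,j) != (k,k) -> (i,j) != (k,c) ->
    (i,j) != (y,c) -> (i,j) != (a,r) -> (i,j) != (a,k) ->
    isparent M' w (i,j) = isparent M w (i,j).
  case=> w1 w2 i j nL nv nyc nR np.
  have M'z : M' i j = M i j by rewrite M'o.
  case Mij : (M i j); last by rewrite /isparent /= M'z Mij /= !andbF.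
  have jk : j != k.
    apply/eqP => e; subst j; case: (colk _ Mij) => e; subst i.
    - by rewrite eqxx in np.
    - by rewrite eqxx in nL.
  have cy : j = c -> k < i -> y < i.
    move=> ej ki; subst j; case: (ltngtP i y) => c1 //.
    - by move: (hxy _ (ltn_trans xk ki) c1); rewrite Mij.
    - by move: nyc; rewrite (ord_eqn c1) eqxx.
  have ar : i = a -> k < j -> r < j.
    move=> ei kj; subst i; case: (ltngtP j r) => c1 //.
    - by move: (hkr _ kj c1); rewrite Mij.
    - by move: nR; rewrite (ord_eqn c1) eqxx.
  have kk : i = k -> c < j -> k < j.
    move=> ei cj; subst i; case: (ltngtP j k) => c1 //.
    - by move: (hrow _ c1); rewrite Mij.
    - by move: nL; rewrite (ord_eqn c1) eqxx.
  case ha : (above M i j).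
  - have ha' : above M' i j by rewrite ab_gen // ?ha.
    rewrite isparent_ab // isparent_ab // M'z.
    case: (eqVneq w2 j) => [e|ne]; last by rewrite !andbF.
    subst w2; rewrite ?eqxx.
    case wi : (w1 < i); last by rewrite !andbF.
    case: (eqVneq (w1,j) (k,c)) => [[e1 e2]|nv'].
      subst w1 j.
      have F0 : [forall t : 'I_n, ((k < t) && (t < i)) ==> ~~ M' t c] = false.
        by apply: (forall_false (P := fun t => M' t c) (t := y)) => //; apply: cy.
      by rewrite F0 Mv !andbF.
    rewrite (M'o w1 j nv'); last by rewrite xpair_eqE (negbTE jk) andbF.
    case: (boolP [&& j == c, w1 < k & k < i]) => [/and3P[/eqP ej w1k ki]|hn].
      have yi := cy ej ki; subst j.
      have wy : w1 < y by apply: ltn_trans ky.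
      have F0 : [forall t : 'I_n, ((w1 < t) && (t < i)) ==> ~~ M' t c] = false.
        by apply: (forall_false (P := fun t => M' t c) (t := y)).
      have F1' : [forall t : 'I_n, ((w1 < t) && (t < i)) ==> ~~ M t c] = false.
        by apply: (forall_false (P := fun t => M t c) (t := y)).
      by rewrite F0 F1' !andbF.
    rewrite (forall_eq (Q := fun t => M t j)) // => t wt ti.
    rewrite M'o // xpair_eqE ?(negbTE jk) ?andbF //.
    apply/negP => /andP[/eqP et /eqP ej]; subst t j.
    by move: hn; rewrite eqxx wt ti.
  - have ha' : ~~ above M' i j by rewrite ab_gen // ?ha.
    have nha : ~~ above M i j by rewrite ha.
    rewrite isparent_lf // isparent_lf // M'z.
    case: (eqVneq w1 i) => [e|ne]; last by rewrite !andbF.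
    subst w1; rewrite ?eqxx.
    case wj : (w2 < j); last by rewrite !andbF.
    case: (eqVneq (i,w2) (a,k)) => [[e1 e2]|np'].
      subst i w2.
      have F0 : [forall t : 'I_n, ((k < t) && (t < j)) ==> ~~ M a t] = false.
        by apply: (forall_false (P := fun t => M a t) (t := r)) => //; apply: ar.
      by rewrite F0 M'p !andbF.
    case: (eqVneq (i,w2) (k,c)) => [[e1 e2]|nv'].
      subst i w2.
      have F0 : [forall t : 'I_n, ((c < t) && (t < j)) ==> ~~ M' k t] = false.
        by apply: (forall_false (P := fun t => M' k t) (t := k)) => //; apply: kk.
      by rewrite F0 Mv !andbF.
    rewrite (M'o i w2 nv' np').
    case: (boolP ([&& i == a, w2 < k & k < j] || [&& i == k, w2 < c & c < j])).
      case/orP => [/and3P[/eqP ei w2k kj]|/and3P[/eqP ei w2c cj]].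
      + have rj := ar ei kj; subst i.
        have wr : w2 < r by apply: ltn_trans kr.
        have F0 : [forall t : 'I_n, ((w2 < t) && (t < j)) ==> ~~ M' a t] = false.
          by apply: (forall_false (P := fun t => M' a t) (t := r)).
        have F1' : [forall t : 'I_n, ((w2 < t) && (t < j)) ==> ~~ M a t] = false.
          by apply: (forall_false (P := fun t => M a t) (t := r)).
        by rewrite F0 F1' !andbF.
      + have kj := kk ei cj; subst i.
        have wk : w2 < k by apply: ltn_trans ck.
        have F0 : [forall t : 'I_n, ((w2 < t) && (t < j)) ==> ~~ M' k t] = false.
          by apply: (forall_false (P := fun t => M' k t) (t := k)).
        have F1' : [forall t : 'I_n, ((w2 < t) && (t < j)) ==> ~~ M k t] = false.
          by apply: (forall_false (P := fun t => M k t) (t := k)).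
        by rewrite F0 F1' !andbF.
    move=> hn; rewrite (forall_eq (Q := fun t => M i t)) // => t wt tj.
    rewrite M'o // xpair_eqE.
    + apply/negP => /andP[/eqP ei /eqP et]; subst i t.
      by move: hn; rewrite eqxx wt tj orbT.
    + apply/negP => /andP[/eqP ei /eqP et]; subst i t.
      by move: hn; rewrite eqxx wt tj.
pose g z := if z == (a,k) then (a,r) else if z == (a,r) then (a,k)
  else if z == (y,c) then (k,c) else if z == (k,c) then (y,c) else z.
have d1 : ((a,r) == (a,k)) = false by rewrite xpair_eqE F6 andbF.
have d2a : ((k,c) == (a,k)) = false by rewrite xpair_eqE F2.
have d2b : ((k,c) == (a,r)) = false by rewrite xpair_eqE F2.
have d2c : ((k,c) == (y,c)) = false by rewrite xpair_eqE (oltF ky).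
have d3a : ((y,c) == (a,k)) = false by rewrite xpair_eqE F3 andbF.
have d3b : ((y,c) == (a,r)) = false by rewrite xpair_eqE (oltF (ltn_trans ck kr)) andbF.
have gp : g (a,k) = (a,r) by rewrite /g eqxx.
have gR : g (a,r) = (a,k) by rewrite /g d1 eqxx.
have gy : g (y,c) = (k,c) by rewrite /g d3a d3b eqxx.
have gv : g (k,c) = (y,c) by rewrite /g d2a d2b d2c eqxx.
have go : forall z, z != (a,k) -> z != (a,r) -> z != (y,c) -> z != (k,c) -> g z = z.
  by move=> z h1 h2 h3 h4; rewrite /g (negbTE h1) (negbTE h2) (negbTE h3) (negbTE h4).
have gK : cancel g g.
  move=> z; case: (eqVneq z (a,k)) => [->|h1]; first by rewrite gp gR.
  case: (eqVneq z (a,r)) => [->|h2]; first by rewrite gR gp.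
  case: (eqVneq z (y,c)) => [->|h3]; first by rewrite gy gv.
  case: (eqVneq z (k,c)) => [->|h4]; first by rewrite gv gy.
  by rewrite !go.
have nparv : forall w, isparent M w (k,c) = false.
  by case=> w1 w2; rewrite /isparent /= Mv /= !andbF.
have abyM : above M y c by apply/aboveP; exists x => //; apply: ltn_trans ky.
have hxyM : isparent M (x,c) (y,c).
  rewrite isparent_ab // Mx My nry eqxx (ltn_trans xk ky) /=.
  by apply/btwP => t xt ty; apply: hxy.
have ch_eq : forall w, w != (a,k) -> w != (k,c) -> children M' w = g @^-1: children M w.
  move=> w wp wv; apply/setP => z; rewrite !inE.
  case: (eqVneq z (a,k)) => [->|h1].
    rewrite gp parp; apply/esym/negbTE/negP => h.
    by move: wp; rewrite (par_uniq h hR) eqxx.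
  case: (eqVneq z (a,r)) => [->|h2].
    rewrite gR parR; apply/eqP/idP => [->|h] //; exact: par_uniq h hq.
  case: (eqVneq z (y,c)) => [->|h3].
    by rewrite gy paryc (negbTE wv) nparv.
  case: (eqVneq z (k,c)) => [->|h4].
    rewrite gv parv; apply/eqP/idP => [->|h] //; exact: par_uniq h hxyM.
  rewrite go //; case: (eqVneq z (k,k)) => [->|h5].
    rewrite parL (negbTE wv); apply/esym/negbTE/negP => h.
    by move: wp; rewrite (par_uniq h hp) eqxx.
  by case: z h1 h2 h3 h4 h5 => i j h1 h2 h3 h4 h5; rewrite pargen.
have card_eq : forall w, w != (a,k) -> w != (k,c) -> #|children M' w| = #|children M w|.
  by move=> w h1 h2; rewrite ch_eq // card_preimset //; apply: (can_inj gK).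
have ch_v : children M' (k,c) = [set (k,k); (y,c)].
  apply/setP => z; rewrite !inE.
  case: (eqVneq z (k,k)) => [->|h5]; first by rewrite parL eqxx.
  case: (eqVneq z (y,c)) => [->|h3]; first by rewrite paryc eqxx.
  case: (eqVneq z (k,c)) => [->|h4]; first by rewrite parv xpair_eqE (ogtF xk).
  case: (eqVneq z (a,r)) => [->|h2]; first by rewrite parR xpair_eqE F2.
  case: (eqVneq z (a,k)) => [->|h1]; first by rewrite parp.
  by case: z h1 h2 h3 h4 h5 => i j h1 h2 h3 h4 h5; rewrite pargen // /isparent /= Mv.
have [H1 [H2 [H3 [H3' H4]]]] := H.
have npM : forall i j, M' i j -> (i,j) != (a,k).
  by move=> i j Mij; apply/eqP => -[ei ej]; subst; move: Mij; rewrite M'p.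
split; last split; last by [].
- split; [|split; [|split; [|split]]].
  + case: H1 => i0 [j0 /andP[rt M0]]; exists i0, j0; rewrite rt /=.
    move: rt => /andP[/eqP i00 /eqP j00].
    have i0k : i0 < k by rewrite i00.
    have j0k : j0 < k by rewrite j00.
    by rewrite M'o // xpair_eqE ?(oltF i0k) ?(oltF j0k) ?andbF.
  + move=> i j M'ij nr.
    case: (eqVneq (i,j) (k,k)) => [[ei ej]|nL].
      by subst; rewrite abL' /=; apply/leftofP; exists c.
    case: (eqVneq (i,j) (k,c)) => [[ei ej]|nv].
      subst; rewrite abv /=; apply/negP => /leftofP [t tc Mt]; move: Mt.
      rewrite M'o ?xpair_eqE ?(oltF tc) ?F2 ?andbF //.
      by rewrite (negbTE (hrow _ (ltn_trans tc ck))).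
    have Mij : M i j by rewrite -M'o // npM.
    by rewrite ab_gen // lf_gen //; apply: H2.
  + move=> i; case: (eqVneq i k) => [->|ik]; first by exists c.
    case: (H3 i) => j Mij.
    case: (eqVneq (i,j) (a,k)) => [[ei ej]|np]; first by subst; exists b.
    by exists j; rewrite M'o // xpair_eqE (negbTE ik).
  + move=> j; case: (eqVneq j k) => [->|jk]; first by exists k.
    case: (H3' j) => i Mij; exists i; rewrite M'o //.
    * by apply/eqP => -[ei ej]; subst; move: Mij; rewrite Mv.
    * by rewrite xpair_eqE (negbTE jk) andbF.
  + move=> i j M'ij.
    case: (eqVneq (i,j) (k,c)) => [[ei ej]|nv].
      by subst; right; rewrite ch_v cards2 xpair_eqE (oltF ky).
    rewrite card_eq ?npM //; apply: H4; by rewrite -M'o ?npM.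
- move=> i j; rewrite /is_leaf.
  case: (eqVneq (i,j) (k,c)) => [[ei ej]|nv].
    subst; rewrite M'v Mv /= ch_v; apply/negbTE/set0Pn; exists (k,k).
    by rewrite !inE eqxx.
  case: (eqVneq (i,j) (a,k)) => [[ei ej]|np].
    subst; rewrite M'p Mp /=; apply/esym/negbTE/set0Pn; exists (k,k).
    by rewrite inE.
  by rewrite M'o // -!cards_eq0 card_eq.
Qed.


Lemma move2 n (M : 'M[bool]_n) (H : is_CNM M) (a k a' r c x y : 'I_n) :
  above M k k -> isparent M (a,k) (k,k) ->
  above M a k -> isparent M (a',k) (a,k) ->
  ~~ above M a r -> isparent M (a,k) (a,r) ->
  (forall i : 'I_n, k < i -> ~~ M i k) ->
  (forall j : 'I_n, j < k -> ~~ M a j) ->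
  c < k -> x < a -> a < y -> M x c -> M y c ->
  (forall t : 'I_n, x < t -> t < y -> ~~ M t c) ->
  is_CNM (mv M (a,k) (a,c)) /\
  (forall i j, is_leaf (mv M (a,k) (a,c)) i j = is_leaf M i j) /\
  mv M (a,k) (a,c) a k = false.
Proof.
move=> abL hp abp hs naR hR hLb hrow ck xa ay Mx My hxy.
set M' := mv M (a,k) (a,c).
move: (hp); rewrite isparent_ab // => /and5P[Mp ML nrL _ /andP[ak /btwP hak]].
move: (hs); rewrite isparent_ab // => /and5P[Ms _ nrp _ /andP[a'a /btwP ha'a]].
move: (hR); rewrite isparent_lf // => /and5P[_ MR nrR _ /andP[kr /btwP hkr]].
have Mv : M a c = false by apply/negbTE/hrow.
have F1 := oltF ak. have F2 := ogtF ak. have F3 := oltF ck. have F4 := ogtF ck.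
have F5 := oltF a'a. have F6 := ogtF kr. have F7 := oltF xa. have F8 := ogtF ay.
have F9 := ogtF (ltn_trans ck kr). have F10 := oltF (ltn_trans xa ay).
have a'k : a' < k by apply: ltn_trans ak.
have F11 := oltF a'k.
have colk : forall i : 'I_n, M i k -> a < i -> i = k.
  move=> i Mi ai; case: (ltngtP i k) => c1; last by apply: ord_eqn.
  - by move: (hak _ ai c1); rewrite Mi.
  - by move: (hLb _ c1); rewrite Mi.
have E : forall i j, M' i j = if (i,j) == (a,c) then true else if (i,j) == (a,k) then false else M i j.
  by move=> i j; rewrite /M' mvE.
have M'v : M' a c by rewrite E eqxx.
have M'p : M' a k = false by rewrite E !xpair_eqE F4 !eqxx ?andbF.
have M'o : forall i j, (i,j) != (a,c) -> (i,j) != (a,k) -> M' i j = M i j.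
  by move=> i j h1 h2; rewrite E (negbTE h1) (negbTE h2).
have M'L : M' k k by rewrite E !xpair_eqE F2 ?andbF ?andFb /= ML.
have M's : M' a' k by rewrite E !xpair_eqE F5 ?andbF ?andFb /= Ms.
have M'R : M' a r by rewrite E !xpair_eqE F9 F6 ?andbF ?andFb /= MR.
have M'x : M' x c by rewrite E !xpair_eqE F7 ?andbF ?andFb /= Mx.
have M'y : M' y c by rewrite E !xpair_eqE F8 ?andbF ?andFb /= My.
have ab_gen : forall i j, M i j -> above M' i j = above M i j.
  move=> i j Mij; apply/idP/idP => /aboveP [t ti Mt].
  - move: Mt; rewrite E; case: eqP => [[et ej] _|_].
      by subst; apply/aboveP; exists x => //; apply: ltn_trans ti.
    case: eqP => // _ Mt; by apply/aboveP; exists t.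
  - case: (eqVneq (t,j) (a,k)) => [[et ej]|ne].
      by subst t j; apply/aboveP; exists a' => //; apply: ltn_trans ti.
    case: (eqVneq (t,j) (a,c)) => [[et ej]|nv]; first by subst; move: Mt; rewrite Mv.
    by apply/aboveP; exists t => //; rewrite M'o.
have lf_gen : forall i j, M' i j -> leftof M' i j = leftof M i j.
  move=> i j Mij; apply/idP/idP => /leftofP [t tj Mt].
  - move: Mt; rewrite E; case: eqP => [[ei et] _|_].
      subst i t.
      case: (eqVneq j k) => [ejk|njk]; first by move: Mij; rewrite ejk M'p.
      move: Mij; rewrite M'o ?xpair_eqE ?eqxx ?(ogtF tj) ?(negbTE njk) // => Maj.
      case: (ltngtP j k) => c1.
      + by move: (hrow _ c1); rewrite Maj.
      + by apply/leftofP; exists k.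
      + by move: njk; rewrite (ord_eqn c1) eqxx.
    case: eqP => // _ Mt; by apply/leftofP; exists t.
  - case: (eqVneq (i,t) (a,k)) => [[ei et]|ne].
      subst i t; apply/leftofP; exists c; last by [].
      by apply: ltn_trans tj.
    case: (eqVneq (i,t) (a,c)) => [[ei et]|nv]; first by subst; move: Mt; rewrite Mv.
    by apply/leftofP; exists t => //; rewrite M'o.
have a0 : 0 < a by apply: leq_ltn_trans a'a.
have nrv : ~~ is_root a c by apply: nroot_l.
have nry : ~~ is_root y c by apply: nroot_l; apply: ltn_trans ay.
have abv : above M' a c by apply/aboveP; exists x.
have aby : above M' y c by apply/aboveP; exists a.
have abL' : above M' k k by rewrite ab_gen.
have naR' : ~~ above M' a r by rewrite ab_gen.
have parL : forall w, isparent M' w (k,k) = (w == (a',k)).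
  case=> w1 w2; rewrite isparent_ab //; apply/idP/idP.
  - move=> /and5P[Mw _ _ /eqP e /andP[w1k /btwP hw]]; subst w2.
    rewrite xpair_eqE eqxx andbT; apply/eqP.
    case: (ltngtP w1 a) => c1.
    + have Mw1 : M w1 k by move: Mw; rewrite M'o ?xpair_eqE ?(oltF c1).
      case: (ltngtP w1 a') => c2; last by apply: ord_eqn.
      * by move: (hw _ c2 a'k); rewrite M's.
      * by move: (ha'a _ c2 c1); rewrite Mw1.
    + have Mw1 : M w1 k by move: Mw; rewrite M'o ?xpair_eqE ?(ogtF c1).
      by move: (hak _ c1 w1k); rewrite Mw1.
    + by move: Mw; rewrite (ord_eqn c1) M'p.
  - rewrite xpair_eqE => /andP[/eqP -> /eqP ->].
    rewrite M's M'L nrL eqxx a'k /=; apply/btwP => t a't tk.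
    case: (ltngtP t a) => c1.
    + by rewrite M'o ?xpair_eqE ?(oltF c1) // ha'a.
    + by rewrite M'o ?xpair_eqE ?(ogtF c1) // hak.
    + by rewrite (ord_eqn c1) M'p.
have parv : forall w, isparent M' w (a,c) = (w == (x,c)).
  case=> w1 w2; rewrite isparent_ab //; apply/idP/idP.
  - move=> /and5P[Mw _ _ /eqP e /andP[w1a /btwP hw]]; subst w2.
    have Mw1 : M w1 c by move: Mw; rewrite M'o ?xpair_eqE ?(oltF w1a).
    rewrite xpair_eqE eqxx andbT; apply/eqP; case: (ltngtP w1 x) => c1.
    + by move: (hw _ c1 xa); rewrite M'x.
    + by move: (hxy _ c1 (ltn_trans w1a ay)); rewrite Mw1.
    + by apply: ord_eqn.
  - rewrite xpair_eqE => /andP[/eqP -> /eqP ->].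
    rewrite M'x M'v nrv eqxx xa /=; apply/btwP => t xt ta.
    by rewrite M'o ?xpair_eqE ?(oltF ta) // hxy // (ltn_trans ta ay).
have paryc : forall w, isparent M' w (y,c) = (w == (a,c)).
  case=> w1 w2; rewrite isparent_ab //; apply/idP/idP.
  - move=> /and5P[Mw _ _ /eqP e /andP[w1y /btwP hw]]; subst w2.
    rewrite xpair_eqE eqxx andbT; apply/eqP; case: (ltngtP w1 a) => c1.
    + by move: (hw _ c1 ay); rewrite M'v.
    + have Mw1 : M w1 c by move: Mw; rewrite M'o ?xpair_eqE ?(ogtF c1).
      by move: (hxy _ (ltn_trans xa c1) w1y); rewrite Mw1.
    + by apply: ord_eqn.
  - rewrite xpair_eqE => /andP[/eqP -> /eqP ->].
    rewrite M'v M'y nry eqxx ay /=; apply/btwP => t at' ty.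
    by rewrite M'o ?xpair_eqE ?(ogtF at') // hxy // (ltn_trans xa at').
have parR : forall w, isparent M' w (a,r) = (w == (a,c)).
  case=> w1 w2; rewrite isparent_lf //; apply/idP/idP.
  - move=> /and5P[Mw _ _ /eqP e /andP[w2r /btwP hw]]; subst w1.
    rewrite xpair_eqE eqxx /=; apply/eqP.
    case: (eqVneq w2 c) => [//|nc].
    case: (eqVneq w2 k) => [e|nk]; first by move: Mw; rewrite e M'p.
    have Mw2 : M a w2 by move: Mw; rewrite M'o ?xpair_eqE ?eqxx ?(negbTE nk) ?(negbTE nc).
    case: (ltngtP w2 k) => c1; last by move: nk; rewrite (ord_eqn c1) eqxx.
    + by move: (hrow _ c1); rewrite Mw2.
    + by move: (hkr _ c1 w2r); rewrite Mw2.
  - rewrite xpair_eqE => /andP[/eqP -> /eqP ->].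
    rewrite M'v M'R nrR eqxx (ltn_trans ck kr) /=; apply/btwP => t ct tr.
    case: (ltngtP t k) => c1.
    + by rewrite M'o ?xpair_eqE ?eqxx ?(ogtF ct) ?(oltF c1) // hrow.
    + by rewrite M'o ?xpair_eqE ?eqxx ?(ogtF (ltn_trans ck c1)) ?(ogtF c1) // hkr.
    + by rewrite (ord_eqn c1) M'p.
have parp : forall w, isparent M' w (a,k) = false.
  by case=> w1 w2; rewrite /isparent /= M'p /= !andbF.
have pargen : forall w (i j : 'I_n), (i,j) != (k,k) -> (i,j) != (a,c) ->
    (i,j) != (y,c) -> (i,j) != (a,r) -> (i,j) != (a,k) ->
    isparent M' w (i,j) = isparent M w (i,j).
  case=> w1 w2 i j nL nv nyc nR np.
  have M'z : M' i j = M i j by rewrite M'o.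
  case Mij : (M i j); last by rewrite /isparent /= M'z Mij /= !andbF.
  have cy : j = c -> a < i -> y < i.
    move=> ej ai; subst j; case: (ltngtP i y) => c1 //.
    - by move: (hxy _ (ltn_trans xa ai) c1); rewrite Mij.
    - by move: nyc; rewrite (ord_eqn c1) eqxx.
  have ar : i = a -> c < j -> r < j.
    move=> ei cj; subst i; case: (ltngtP j k) => c1.
    - by move: (hrow _ c1); rewrite Mij.
    - case: (ltngtP j r) => c2 //.
      + by move: (hkr _ c1 c2); rewrite Mij.
      + by move: nR; rewrite (ord_eqn c2) eqxx.
    - by move: np; rewrite (ord_eqn c1) eqxx.
  have ck' : j = k -> a < i -> False.
    move=> ej ai; subst j; move: (colk _ Mij ai) => e; subst i.
    by rewrite eqxx in nL.
  case: (eqVneq (w1,w2) (a,k)) => [[e1 e2]|wp].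
    subst w1 w2.
    rewrite (_ : isparent M' (a,k) (i,j) = false); last by rewrite /isparent /= M'p.
    apply/esym/negbTE/negP => h; case: (boolP (above M i j)) => abz.
    - by move: (below_uniq h hp abz abL) => e; rewrite e eqxx in nL.
    - by move: (right_uniq h hR abz naR) => e; rewrite e eqxx in nR.
  case: (eqVneq (w1,w2) (a,c)) => [[e1 e2]|wv].
    subst w1 w2.
    rewrite (_ : isparent M (a,c) (i,j) = false); last by rewrite /isparent /= Mv.
    apply/negbTE/negP => h; case: (boolP (above M i j)) => abz.
    - move: h; rewrite isparent_ab ?ab_gen // => /and5P[_ _ _ /eqP ej /andP[ai /btwP hw]].
      subst j; have yi := cy erefl ai.
      by move: (hw y ay yi); rewrite M'y.
    - move: h; rewrite isparent_lf ?ab_gen // => /and5P[_ _ _ /eqP ei /andP[cj /btwP hw]].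
      subst i; have rj := ar erefl cj.
      by move: (hw r (ltn_trans ck kr) rj); rewrite M'R.
  have M'w : M' w1 w2 = M w1 w2 by rewrite M'o.
  case ha : (above M i j).
  - have ha' : above M' i j by rewrite ab_gen.
    rewrite isparent_ab // isparent_ab // M'z M'w.
    case: (boolP [&& j == c, w1 < y & y < i]) => [/and3P[/eqP ej w1y yi]|hn].
      subst j.
      have F0 : [forall t : 'I_n, ((w1 < t) && (t < i)) ==> ~~ M' t c] = false.
        by apply: (forall_false (P := fun t => M' t c) (t := y)).
      have F1' : [forall t : 'I_n, ((w1 < t) && (t < i)) ==> ~~ M t c] = false.
        by apply: (forall_false (P := fun t => M t c) (t := y)).
      by rewrite F0 F1' !andbF.
    rewrite (forall_eq (Q := fun t => M t j)) // => t wt ti.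
    rewrite M'o // xpair_eqE; apply/negP => /andP[/eqP et /eqP ej]; subst t j.
    + by move: hn; rewrite eqxx (ltn_trans wt ay) (cy erefl ti).
    + by case: (ck' erefl ti).
  - have ha' : ~~ above M' i j by rewrite ab_gen // ha.
    have nha : ~~ above M i j by rewrite ha.
    rewrite isparent_lf // isparent_lf // M'z M'w.
    case: (boolP [&& i == a, w2 < r & r < j]) => [/and3P[/eqP ei w2r rj]|hn].
      subst i.
      have F0 : [forall t : 'I_n, ((w2 < t) && (t < j)) ==> ~~ M' a t] = false.
        by apply: (forall_false (P := fun t => M' a t) (t := r)).
      have F1' : [forall t : 'I_n, ((w2 < t) && (t < j)) ==> ~~ M a t] = false.
        by apply: (forall_false (P := fun t => M a t) (t := r)).
      by rewrite F0 F1' !andbF.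
    rewrite (forall_eq (Q := fun t => M i t)) // => t wt tj.
    rewrite M'o // xpair_eqE; apply/negP => /andP[/eqP ei /eqP et]; subst i t.
    + by move: hn; rewrite eqxx (ltn_trans wt (ltn_trans ck kr)) (ar erefl tj).
    + by move: hn; rewrite eqxx (ltn_trans wt kr) (ar erefl (ltn_trans ck tj)).
pose g z := if z == (a,k) then (k,k) else if z == (k,k) then (a,k)
  else if z == (y,c) then (a,c) else if z == (a,c) then (y,c) else z.
have d1 : ((k,k) == (a,k)) = false by rewrite xpair_eqE F2.
have d2a : ((a,c) == (a,k)) = false by rewrite xpair_eqE F3 andbF.
have d2b : ((a,c) == (k,k)) = false by rewrite xpair_eqE F1.
have d2c : ((a,c) == (y,c)) = false by rewrite xpair_eqE (oltF ay).
have d3a : ((y,c) == (a,k)) = false by rewrite xpair_eqE F8.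
have d3b : ((y,c) == (k,k)) = false by rewrite xpair_eqE F3 andbF.
have gp : g (a,k) = (k,k) by rewrite /g eqxx.
have gL : g (k,k) = (a,k) by rewrite /g d1 eqxx.
have gy : g (y,c) = (a,c) by rewrite /g d3a d3b eqxx.
have gv : g (a,c) = (y,c) by rewrite /g d2a d2b d2c eqxx.
have go : forall z, z != (a,k) -> z != (k,k) -> z != (y,c) -> z != (a,c) -> g z = z.
  by move=> z h1 h2 h3 h4; rewrite /g (negbTE h1) (negbTE h2) (negbTE h3) (negbTE h4).
have gK : cancel g g.
  move=> z; case: (eqVneq z (a,k)) => [->|h1]; first by rewrite gp gL.
  case: (eqVneq z (k,k)) => [->|h2]; first by rewrite gL gp.
  case: (eqVneq z (y,c)) => [->|h3]; first by rewrite gy gv.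
  case: (eqVneq z (a,c)) => [->|h4]; first by rewrite gv gy.
  by rewrite !go.
have nparv : forall w, isparent M w (a,c) = false.
  by case=> w1 w2; rewrite /isparent /= Mv /= !andbF.
have abyM : above M y c by apply/aboveP; exists x => //; apply: ltn_trans ay.
have hxyM : isparent M (x,c) (y,c).
  rewrite isparent_ab // Mx My nry eqxx (ltn_trans xa ay) /=.
  by apply/btwP => t xt ty; apply: hxy.
have ch_eq : forall w, w != (a,k) -> w != (a,c) -> children M' w = g @^-1: children M w.
  move=> w wp wv; apply/setP => z; rewrite !inE.
  case: (eqVneq z (a,k)) => [->|h1].
    rewrite gp parp; apply/esym/negbTE/negP => h.
    by move: wp; rewrite (par_uniq h hp) eqxx.
  case: (eqVneq z (k,k)) => [->|h2].
    rewrite gL parL; apply/eqP/idP => [->|h] //; exact: par_uniq h hs.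
  case: (eqVneq z (y,c)) => [->|h3].
    by rewrite gy paryc (negbTE wv) nparv.
  case: (eqVneq z (a,c)) => [->|h4].
    rewrite gv parv; apply/eqP/idP => [->|h] //; exact: par_uniq h hxyM.
  rewrite go //; case: (eqVneq z (a,r)) => [->|h5].
    rewrite parR (negbTE wv); apply/esym/negbTE/negP => h.
    by move: wp; rewrite (par_uniq h hR) eqxx.
  by case: z h1 h2 h3 h4 h5 => i j h1 h2 h3 h4 h5; rewrite pargen.
have card_eq : forall w, w != (a,k) -> w != (a,c) -> #|children M' w| = #|children M w|.
  by move=> w h1 h2; rewrite ch_eq // card_preimset //; apply: (can_inj gK).
have ch_v : children M' (a,c) = [set (a,r); (y,c)].
  apply/setP => z; rewrite !inE.
  case: (eqVneq z (a,r)) => [->|h5]; first by rewrite parR eqxx.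
  case: (eqVneq z (y,c)) => [->|h3]; first by rewrite paryc eqxx.
  case: (eqVneq z (a,c)) => [->|h4]; first by rewrite parv xpair_eqE (ogtF xa).
  case: (eqVneq z (k,k)) => [->|h2]; first by rewrite parL xpair_eqE F3 andbF.
  case: (eqVneq z (a,k)) => [->|h1]; first by rewrite parp.
  by case: z h1 h2 h3 h4 h5 => i j h1 h2 h3 h4 h5; rewrite pargen // /isparent /= Mv.
have [H1 [H2 [H3 [H3' H4]]]] := H.
have npM : forall i j, M' i j -> (i,j) != (a,k).
  by move=> i j Mij; apply/eqP => -[ei ej]; subst; move: Mij; rewrite M'p.
split; last split; last by [].
- split; [|split; [|split; [|split]]].
  + case: H1 => i0 [j0 /andP[rt M0]]; exists i0, j0; rewrite rt /=.
    move: rt => /andP[/eqP i00 /eqP j00].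
    have i0a : i0 < a by rewrite i00.
    by rewrite M'o // xpair_eqE ?(oltF i0a) ?andbF.
  + move=> i j M'ij nr.
    case: (eqVneq (i,j) (a,c)) => [[ei ej]|nv].
      subst; rewrite abv /=; apply/negP => /leftofP [t tc Mt]; move: Mt.
      rewrite M'o ?xpair_eqE ?eqxx ?(oltF tc) ?(oltF (ltn_trans tc ck)) ?andbF //.
      by rewrite (negbTE (hrow _ (ltn_trans tc ck))).
    have Mij : M i j by rewrite -M'o // npM.
    by rewrite ab_gen // lf_gen //; apply: H2.
  + move=> i; case: (eqVneq i a) => [->|ia]; first by exists c.
    case: (H3 i) => j Mij.
    by exists j; rewrite M'o // xpair_eqE (negbTE ia).
  + move=> j; case: (eqVneq j c) => [->|jc]; first by exists a.
    case: (eqVneq j k) => [->|jk]; first by exists k.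
    case: (H3' j) => i Mij; exists i; rewrite M'o //.
    * by rewrite xpair_eqE (negbTE jc) andbF.
    * by rewrite xpair_eqE (negbTE jk) andbF.
  + move=> i j M'ij.
    case: (eqVneq (i,j) (a,c)) => [[ei ej]|nv].
      by subst; right; rewrite ch_v cards2 xpair_eqE (oltF ay).
    rewrite card_eq ?npM //; apply: H4; by rewrite -M'o ?npM.
- move=> i j; rewrite /is_leaf.
  case: (eqVneq (i,j) (a,c)) => [[ei ej]|nv].
    subst; rewrite M'v Mv /= ch_v; apply/negbTE/set0Pn; exists (a,r).
    by rewrite !inE eqxx.
  case: (eqVneq (i,j) (a,k)) => [[ei ej]|np].
    subst; rewrite M'p Mp /=; apply/esym/negbTE/set0Pn; exists (k,k).
    by rewrite inE.
  by rewrite M'o // -!cards_eq0 card_eq.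
Qed.


Definition trm n (M : 'M[bool]_n) : 'M[bool]_n := \matrix_(i, j) M j i.

Lemma trmE n (M : 'M[bool]_n) i j : trm M i j = M j i.
Proof. by rewrite mxE. Qed.

Lemma trmK n (M : 'M[bool]_n) : trm (trm M) = M.
Proof. by apply/matrixP => i j; rewrite !trmE. Qed.

Lemma above_trm n (M : 'M[bool]_n) i j : above (trm M) i j = leftof M j i.
Proof. by apply: eq_existsb => t; rewrite trmE. Qed.

Lemma leftof_trm n (M : 'M[bool]_n) i j : leftof (trm M) i j = above M j i.
Proof. by apply: eq_existsb => t; rewrite trmE. Qed.

Lemma is_root_sym n (i j : 'I_n) : is_root i j = is_root j i.
Proof. by rewrite /is_root andbC. Qed.

Definition swp n (z : 'I_n * 'I_n) := (z.2, z.1).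

Arguments swp {n}.
Lemma swpK n : cancel (@swp n) (@swp n).
Proof. by case. Qed.

Lemma isparent_trm n (M : 'M[bool]_n) (H : is_CNM M) w z :
  isparent (trm M) (swp w) (swp z) = isparent M w z.
Proof.
case: w z => [a b] [i j].
change (isparent (trm M) (b,a) (j,i) = isparent M (a,b) (i,j)).
case: H => _ [H2 _].
case Mij : (M i j); last by rewrite /isparent /= !trmE Mij /= !andbF.
case: (boolP (is_root i j)) => rt.
  by rewrite /isparent /= !trmE is_root_sym rt /= !andbF.
move: (H2 _ _ Mij rt) => xr.
case ha : (above M i j).
- have hl : leftof M i j = false by move: xr; rewrite ha; case: (leftof M i j).
  rewrite [isparent M _ _]isparent_ab // [isparent (trm M) _ _]isparent_lf; last by rewrite above_trm hl.
  rewrite !trmE Mij is_root_sym.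
  by rewrite (forall_eq (Q := fun t => M t j)) // => t _ _; rewrite trmE.
- have hl : leftof M i j by move: xr; rewrite ha.
  rewrite [isparent M _ _]isparent_lf ?ha // [isparent (trm M) _ _]isparent_ab; last by rewrite above_trm hl.
  rewrite !trmE Mij is_root_sym.
  by rewrite (forall_eq (Q := fun t => M i t)) // => t _ _; rewrite trmE.
Qed.

Lemma children_trm n (M : 'M[bool]_n) (H : is_CNM M) w :
  children (trm M) w = swp @^-1: children M (swp w).
Proof.
apply/setP => z; rewrite !inE -[isparent M _ _](isparent_trm H).
by rewrite !swpK.
Qed.

Lemma card_children_trm n (M : 'M[bool]_n) (H : is_CNM M) w :
  #|children (trm M) w| = #|children M (swp w)|.
Proof. by rewrite children_trm // card_preimset //; apply: (can_inj (@swpK n)). Qed.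

Lemma trm_CNM n (M : 'M[bool]_n) : is_CNM M -> is_CNM (trm M).
Proof.
move=> H; have [H1 [H2 [H3 [H3' H4]]]] := H.
split; [|split; [|split; [|split]]].
- case: H1 => i [j /andP[rt Mij]]; exists j, i.
  by rewrite trmE Mij is_root_sym rt.
- move=> i j; rewrite trmE is_root_sym => Mji rt.
  by rewrite above_trm leftof_trm addbC; apply: H2.
- by move=> i; case: (H3' i) => j h; exists j; rewrite trmE.
- by move=> j; case: (H3 j) => i h; exists i; rewrite trmE.
- move=> i j; rewrite trmE => Mji.
  by rewrite (card_children_trm H (i,j)); apply: H4.
Qed.

Lemma is_leaf_trm n (M : 'M[bool]_n) (H : is_CNM M) i j :
  is_leaf (trm M) i j = is_leaf M j i.
Proof. by rewrite /is_leaf trmE -!cards_eq0 (card_children_trm H (i,j)). Qed.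


Lemma root_nonleaf n (M : 'M[bool]_n) (H : is_CNM M) (s : 'S_n)
  (hs : forall i j, is_leaf M i j = (s i == j)) :
  1 < n -> forall z : 'I_n, val z = 0 -> s z != z.
Proof.
move=> n1 z z0; apply/negP => /eqP sz.
have [H1 [H2 [H3 [H3' H4]]]] := H.
have row0 : forall j, M z j -> val j = 0.
  by move=> j Mj; have := vertex_le_leaf H hs Mj; rewrite sz z0 leqn0 => /eqP.
have sz' : (s^-1)%g z = z by rewrite -{1}sz permK.
have col0 : forall i, M i z -> val i = 0.
  by move=> i Mi; have := vertex_le_leafc H hs Mi; rewrite sz' z0 leqn0 => /eqP.
pose o1 : 'I_n := Ordinal n1.
case: (H3 o1) => j Mj.
case: (ex_min_ord (P := fun t => M o1 t) Mj) => j0 Mj0 hj0.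
have nr : ~~ is_root o1 j0 by apply: nroot_l.
move: (H2 _ _ Mj0 nr).
have lf : leftof M o1 j0 = false.
  apply/negbTE/negP => /leftofP [t tj Mt]; move: (hj0 t Mt).
  by rewrite leqNgt tj.
rewrite lf addbF => /aboveP [t t1 Mt].
have tz : t = z by apply: ord_eqn; rewrite z0; move: t1; rewrite ltnS leqn0 => /eqP.
rewrite tz in Mt; have := row0 _ Mt => j00.
have jz : j0 = z by apply: ord_eqn; rewrite z0.
rewrite jz in Mj0; have := col0 _ Mj0.
by [].
Qed.

Lemma keyA n (M : 'M[bool]_n) (H : is_CNM M) (s : 'S_n)
  (hs : forall i j, is_leaf M i j = (s i == j)) (k : 'I_n) :
  s k = k -> above M k k ->
  exists M2, [/\ is_CNM M2, forall i j, is_leaf M2 i j = is_leaf M i j & M2 <> M].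
Proof.
move=> sk abL.
have ML : M k k by have := leaf_vertex hs k; rewrite sk.
have k0 : 0 < k by case/aboveP: abL => t tk _; apply: leq_ltn_trans tk.
have nrL : ~~ is_root k k := nroot_l _ k0.
case: (exists_parent H ML nrL) => [[a b] hp].
move: (hp); rewrite isparent_ab // => /and5P[Mp _ _ /eqP ebk /andP[ak _]]; subst b.
have sk' : (s^-1)%g k = k by rewrite -{1}sk permK.
have hLb : forall i : 'I_n, k < i -> ~~ M i k.
  move=> i ki; apply/negP => Mi; have := vertex_le_leafc H hs Mi.
  by rewrite sk' leqNgt ki.
have [H1 [H2 [H3 [H3' H4]]]] := H.
have c2 : #|children M (a,k)| = 2.
  case: (H4 a k Mp) => // c0.
  have : (k,k) \in children M (a,k) by rewrite inE.
  by rewrite (cards0_eq c0) inE.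
case: (card2_split c2) => zb [[a2 r] [hzb azb hR naR]].
move: (hR); rewrite isparent_lf // => /and5P[_ MR _ /eqP ea /andP[kr _]]; subst a2.
have sar : r <= s a := vertex_le_leaf H hs MR.
have nrp : ~~ is_root a k := nroot_r _ k0.
case: (exists_parent H Mp nrp) => [[a' b'] hq].
case abp : (above M a k).
- move: (hq); rewrite isparent_ab // => /and5P[_ _ _ /eqP eb /andP[a'a _]]; subst b'.
  have hrow : forall j : 'I_n, j < k -> ~~ M a j.
    move=> j jk; apply/negP => Maj.
    have h0 : (j < k) && M a j by rewrite jk Maj.
    case: (ex_max_ord (P := fun t => (t < k) && M a t) h0) => m /andP[mk Mm] hm.
    have : is_leaf M a m.
      apply: (left_of_above_leaf H Mm Mp mk) => // t mt tk; apply/negP => Mt.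
      by move: (hm t); rewrite tk Mt leqNgt mt => /(_ isT).
    rewrite hs => /eqP sam; move: sar; rewrite sam => h.
    by move: (leq_ltn_trans h (ltn_trans mk kr)); rewrite ltnn.
  have a0 : 0 < a by apply: leq_ltn_trans a'a.
  have [y0 [c0 [ay0 c0k My0]]] : exists y c : 'I_n, [/\ a < y, c < k & M y c].
    apply: (exists_below H hs (D := [set i : 'I_n | i < a])).
    + move=> i si ia; rewrite inE ltn_neqAle ia andbT; apply/negP => /eqP e.
      have e' : i = a by apply: ord_eqn.
      by move: si; rewrite e' ltnNge (leq_trans (ltnW kr) sar).
    + apply: proper_card; apply/properP; split.
      * by apply/subsetP => i; rewrite !inE => h; apply: ltn_trans h ak.
      * by exists a; rewrite !inE ?ltnn ?ak.
  case: (crossing H a0 hrow ay0 c0k My0) => c [x [y [ck /andP[xa ay] Mx My hxy]]].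
  have [HM2 [HL Hak]] := move2 H abL hp abp hq naR hR hLb hrow ck xa ay Mx My hxy.
  by exists (mv M (a,k) (a,c)); split => // e; move: Hak; rewrite e Mp.
- move: (hq); rewrite isparent_lf ?abp // => /and5P[Mq _ _ /eqP ea' /andP[b'k _]].
  subst a'.
  have hrow : forall j : 'I_n, j < k -> ~~ M k j.
    move=> j jk; apply/negP => Mkj.
    have h0 : (j < k) && M k j by rewrite jk Mkj.
    case: (ex_max_ord (P := fun t => (t < k) && M k t) h0) => m /andP[mk Mm] hm.
    have : is_leaf M k m.
      apply: (left_of_above_leaf H Mm ML mk) => // t mt tk; apply/negP => Mt.
      by move: (hm t); rewrite tk Mt leqNgt mt => /(_ isT).
    by rewrite hs sk => /eqP e; move: mk; rewrite -e ltnn.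
  have [y0 [c0 [ky0 c0k My0]]] : exists y c : 'I_n, [/\ k < y, c < k & M y c].
    apply: (exists_below H hs (D := [set i : 'I_n | i < k] :\ a)).
    + move=> i si ik; rewrite !inE; apply/andP; split.
      * apply/negP => /eqP e'.
        by move: si; rewrite e' ltnNge (leq_trans (ltnW kr) sar).
      * rewrite ltn_neqAle ik andbT; apply/negP => /eqP e.
        have e' : i = k by apply: ord_eqn.
        by move: si; rewrite e' sk ltnn.
    + by rewrite (cardsD1 a [set i : 'I_n | i < k]) inE ak add1n ltnSn.
  case: (crossing H k0 hrow ky0 c0k My0) => c [x [y [ck /andP[xk ky] Mx My hxy]]].
  have [HM2 [HL Hak]] := move1 H abL hp (negbT abp) hq naR hR hLb hrow ck xk ky Mx My hxy.
  by exists (mv M (a,k) (k,c)); split => // e; move: Hak; rewrite e Mp.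
Qed.

Unset Implicit Arguments.

Theorem lemma3p2 (n : nat) (P : 'M[bool]_n) :
  2 <= n -> is_perm_matrix P ->
  (exists! M : 'M[bool]_n, is_CNM M /\ leaf_matrix M = P) ->
  forall i : 'I_n, P i i = false.
Proof.
move=> n2 [s hP] [M [[HM hML] huniq]] i.
have hs : forall i j, is_leaf M i j = (s i == j).
  by apply: leaf_perm => a b; rewrite hML hP.
rewrite hP; apply/negbTE/negP => /eqP si.
suff [M2 [HM2 HL2 ne]] : exists M2, [/\ is_CNM M2,
    forall a b, is_leaf M2 a b = is_leaf M a b & M2 <> M].
  apply: ne; apply/esym/huniq; split => //.
  by rewrite -hML; apply/matrixP => a b; rewrite !mxE HL2.
have ML : M i i by have := leaf_vertex hs i; rewrite si.
case: (posnP i) => [i0|ipos].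
  by move: (root_nonleaf HM hs n2 i0); rewrite si eqxx.
have nr := nroot_l i ipos.
have [_ [H2 _]] := HM.
move: (H2 i i ML nr).
case ab: (above M i i) => /= hl.
- by apply: (keyA HM hs si ab).
- have HT := trm_CNM HM.
  have hsT : forall a b, is_leaf (trm M) a b = ((s^-1)%g a == b).
    move=> a b; rewrite is_leaf_trm // hs.
    by apply/eqP/eqP => [<-|<-]; rewrite ?permK ?permKV.
  have siT : (s^-1)%g i = i by rewrite -{1}si permK.
  have abT : above (trm M) i i by rewrite above_trm.
  case: (keyA HT hsT siT abT) => M3 [HM3 HL3 ne3].
  exists (trm M3); split.
  + by apply: trm_CNM.
  + by move=> a b; rewrite is_leaf_trm // HL3 is_leaf_trm.
  + by move=> e; apply: ne3; rewrite -e trmK.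
Qed.
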